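(* Let $\mathcal F$ be a filtration sequence, $E=(E_{m,n})_{m,n\in\mathbb N}$ a nonnegative process adapted to $\mathcal F$, and $r$ an extended integer sequence. Then the following two conditions are equivalent: (a) for every $\tau=(\tau_m)_{m\in\mathbb N}\in\mathcal T_{\mathrm{fin}}(r,\mathcal F,\mathcal P)$, $\limsup_{m\to\infty}\sup_{P\in\mathcal P}\mathbb E_P[E_{m,\tau_m}]\le 1$; (b) $\limsup_{m\to\infty}\sup_{\tau\in\mathcal T_{\mathrm{fin}}(r_m,\mathcal F_{m,\bullet},\mathcal P)}\sup_{P\in\mathcal P}\mathbb E_P[E_{m,\tau}]\le 1$. Moreover, if they hold, there exists $m_0\in\mathbb N$ such that $\sup_{P\in\mathcal P}\mathbb E_P[E_{m,n}]<\infty$ for all $m\ge m_0$ and all $n\in\mathbb N$ with $n\le r_m$; in particular such $E_{m,n}$ are $P$-integrable for every $P\in\mathcal P$.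
   Context: $(\Omega,\mathcal A)$ is a measurable space and $\mathcal P$ a set of probability measures on it. $\mathbb N=\{0,1,\dots\}$; an extended integer is an element of $\mathbb N\cup\{\infty\}$. Nonnegative random variables take values in $[0,\infty]$ with $\mathbb E_P[X]:=\infty$ if not $P$-integrable. A filtration sequence is a family $(\mathcal F_{m,n})_{m,n\in\mathbb N}$ of sub-$\sigma$-algebras of $\mathcal A$ such that each $\mathcal F_{m,\bullet}$ is a filtration; adapted means $E_{m,n}$ is $\mathcal F_{m,n}$-measurable. For a filtration $\mathcal G$ and $\rho\in\mathbb N\cup\{\infty\}$, $\mathcal T(\rho,\mathcal G,\mathcal P)$ is the set of $\mathcal G$-stopping times $\tau$ (values in $\mathbb N\cup\{\infty\}$) with $P[\tau\le\rho]=1$ for all $P\in\mathcal P$, and $\mathcal T_{\mathrm{fin}}(\rho,\mathcal G,\mathcal P)$ is its subset of stopping times with $\tau(\omega)<\infty$ for every $\omega\in\Omega$. $\mathcal T_{\mathrm{fin}}(r,\mathcal F,\mathcal P)$ is the set of sequences $(\tau_m)_{m}$ with $\tau_m\in\mathcal T_{\mathrm{fin}}(r_m,\mathcal F_{m,\bullet},\mathcal P)$ for all $m$. *)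

(* Defs.v *)
From HB Require Import structures.
From mathcomp Require Import all_boot all_order all_algebra.
From mathcomp Require Import all_classical all_reals all_analysis.
From mathcomp Require Import measurable_realfun.
Set Implicit Arguments. Unset Strict Implicit. Unset Printing Implicit Defensive.
Import Order.TTheory GRing.Theory Num.Theory.
Local Open Scope classical_set_scope.
Local Open Scope ring_scope.

(** Extended integers N ∪ {∞}: [Some n] is n, [None] is ∞. *)
Definition ext_nat := option nat.
Definition ext_le (n : nat) (r : ext_nat) : Prop :=
  match r with Some k => (n <= k)%N | None => True end.

Section defs.
Context {d : measure_display} {Omega : measurableType d} {R : realType}.

Definition is_filtration (G : nat -> set (set Omega)) : Prop :=
  (forall n, sigma_algebra setT (G n)) /\
  (forall n, G n `<=` measurable) /\
  (forall n, G n `<=` G n.+1).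

Definition is_filtration_seq (F : nat -> nat -> set (set Omega)) : Prop :=
  forall m, is_filtration (F m).

Definition G_measurable (G : set (set Omega)) (X : Omega -> \bar R) : Prop :=
  forall A : set (\bar R), measurable A -> G (X @^-1` A).

Definition nonneg_adapted (F : nat -> nat -> set (set Omega))
    (E : nat -> nat -> Omega -> \bar R) : Prop :=
  (forall m n w, (0 <= E m n w)%E) /\
  (forall m n, G_measurable (F m n) (E m n)).

(** Finite-valued (everywhere) G-stopping times, i.e. elements of
    T_fin(rho, G, P): {tau <= n} in G n for all n, and P[tau <= rho] = 1
    for every P in Pset. *)
Definition is_fin_stopping_time (rho : ext_nat) (G : nat -> set (set Omega))
    (Pset : set (probability Omega R)) (tau : Omega -> nat) : Prop :=
  (forall n, G n [set w | (tau w <= n)%N]) /\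
  (forall P, Pset P -> P [set w | ext_le (tau w) rho] = 1%E).

(** sup_{P in Pset} E_P[X] for a nonnegative X (the integral is +oo if X
    is not P-integrable). *)
Definition supE (Pset : set (probability Omega R)) (X : Omega -> \bar R)
    : \bar R :=
  ereal_sup [set (\int[P]_w X w)%E | P in Pset].

End defs.

(* Main.v *)
Require Import Defs.
From HB Require Import structures.
From mathcomp Require Import all_boot all_order all_algebra.
From mathcomp Require Import all_classical all_reals all_analysis.
From mathcomp Require Import measurable_realfun lra.
Import Order.TTheory GRing.Theory Num.Theory.
Local Open Scope classical_set_scope.
Local Open Scope ereal_scope.

Lemma limn_esupE (R : realType) (u : (\bar R)^nat) :
  limn_esup u = ereal_inf (range (esups u)).
Proof. by rewrite limn_esup_lim; apply: cvg_lim => //; exact: cvg_esups_inf. Qed.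

Lemma limn_esup_mono (R : realType) (u v : (\bar R)^nat) :
  (forall n, u n <= v n) -> limn_esup u <= limn_esup v.
Proof.
move=> uv; rewrite !limn_esupE; apply: le_ereal_inf_tmp => _ [n _ <-].
apply: (@le_trans _ _ (esups u n)); first by apply: ereal_inf_lbound; exists n.
apply: ge_ereal_sup => _ [k /= nk <-]; apply: (le_trans (uv k)).
by apply: ereal_sup_ubound; exists k.
Qed.

Lemma limn_esup_io (R : realType) (u : (\bar R)^nat) (c : \bar R) :
  (forall N, exists2 k, (N <= k)%N & c < u k) -> c <= limn_esup u.
Proof.
move=> H; rewrite limn_esupE; apply: le_ereal_inf_tmp => _ [N _ <-].
have [k Nk ck] := H N; apply: (le_trans (ltW ck)).
by apply: ereal_sup_ubound; exists k.
Qed.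

Lemma limn_esup_ev (R : realType) (u : (\bar R)^nat) (c : \bar R) :
  limn_esup u < c -> exists N, forall k, (N <= k)%N -> u k < c.
Proof.
rewrite limn_esupE => /ereal_inf_lt [_ [N _ <-]] h; exists N => k Nk.
apply: le_lt_trans h; by apply: ereal_sup_ubound; exists k.
Qed.

Lemma limn_esup_gt (R : realType) (u : (\bar R)^nat) :
  1 < limn_esup u -> exists c : R, (1 < c)%R /\ forall N, exists2 k, (N <= k)%N & c%:E < u k.
Proof.
rewrite limn_esupE => h.
have [c [c1 cl]] : exists c : R, (1 < c)%R /\ c%:E < ereal_inf (range (esups u)).
  move: h; case: (ereal_inf _) => [r| |] //.
  - rewrite lte_fin => r1; exists ((1 + r) / 2)%R; rewrite lte_fin; split; lra.
  - by move=> _; exists 2%R; split; [lra|rewrite ltey].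
exists c; split => // N.
have : c%:E < esups u N.
  by apply: (lt_le_trans cl); apply: ereal_inf_lbound; exists N.
by move=> /ereal_sup_gt [_ [k /= Nk <-]] ck; exists k.
Qed.

Lemma const_stop (d : measure_display) (Omega : measurableType d) (R : realType)
  (Pset : set (probability Omega R)) (G : nat -> set (set Omega)) rho n :
  is_filtration G -> ext_le n rho ->
  is_fin_stopping_time rho G Pset (fun _ : Omega => n).
Proof.
move=> [sG [_ _]] hn; rewrite /is_fin_stopping_time; constructor.
- move=> k /=; have [G0 GC _] := sG k.
  have [nk|nk] := leqP n k.
    have -> : [set w : Omega | true] = setT by apply/seteqP; split.
    by rewrite -(setD0 setT); apply: GC.
  have -> : [set w : Omega | false] = set0.
    by apply/seteqP; split => // w /=.
  exact: G0.
- move=> P _ /=; have -> : [set w : Omega | ext_le n rho] = setT by apply/seteqP; split.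
  exact: probability_setT.
Qed.

Theorem mainTheorem3 (d : measure_display) (Omega : measurableType d)
  (R : realType) (Pset : set (probability Omega R))
  (F : nat -> nat -> set (set Omega)) (E : nat -> nat -> Omega -> \bar R)
  (r : nat -> ext_nat) :
  is_filtration_seq F ->
  nonneg_adapted F E ->
  let cond_a :=
    forall tau : nat -> Omega -> nat,
      (forall m, is_fin_stopping_time (r m) (F m) Pset (tau m)) ->
      limn_esup (fun m => supE Pset (fun w => E m (tau m w) w)) <= 1 in
  let cond_b :=
    limn_esup (fun m =>
      ereal_sup [set supE Pset (fun w => E m (t w) w) |
                 t in [set t : Omega -> nat |
                         is_fin_stopping_time (r m) (F m) Pset t]]) <= 1 in
  (cond_a <-> cond_b) /\
  (cond_a ->
   exists m0 : nat, forall m n : nat, (m0 <= m)%N -> ext_le n (r m) ->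
     supE Pset (E m n) < +oo /\
     (forall P : probability Omega R, Pset P -> P.-integrable setT (E m n))).
Proof.
move=> hF [E0 Em] cond_a cond_b.
pose s := fun m => ereal_sup [set supE Pset (fun w => E m (t w) w) |
                 t in [set t : Omega -> nat |
                         is_fin_stopping_time (r m) (F m) Pset t]].
have ab : cond_a -> cond_b.
  move=> ha; rewrite /cond_b leNgt; apply/negP => /limn_esup_gt [c [c1 hc]].
  pose P m (t : Omega -> nat) :=
    is_fin_stopping_time (r m) (F m) Pset t /\ c%:E < supE Pset (fun w => E m (t w) w).
  pose tau m : Omega -> nat :=
    match pselect (exists t, P m t) with
    | left h => projT1 (cid h) | right _ => fun _ => 0%N end.
  have tauS m : is_fin_stopping_time (r m) (F m) Pset (tau m).
    rewrite /tau; case: pselect => [h|_]; first by case: (projT2 (cid h)).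
    by apply: const_stop => //; case: (r m).
  have := ha tau tauS; apply/negP; rewrite -ltNge.
  apply: (@lt_le_trans _ _ c%:E); first by rewrite lte_fin.
  apply: limn_esup_io => N; have [k Nk ck] := hc N; exists k => //.
  have [t [tS tc]] : exists t, P k t.
    by move: ck => /ereal_sup_gt [_ [t tS <-]] ct; exists t.
  rewrite /tau; case: pselect => [h|[]]; last by exists t.
  by case: (projT2 (cid h)).
split.
  split => //= hb tau tauS; apply: le_trans hb; apply: limn_esup_mono => m.
  by apply: ereal_sup_ubound => /=; exists (tau m) => //.
move=> /ab hb.
have [N HN] : exists N, forall k, (N <= k)%N -> s k < 2%:E.
  by apply: limn_esup_ev; apply: (le_lt_trans hb); rewrite lte_fin; lra.
exists N => m n Nm hn.
have hsup : supE Pset (E m n) < +oo.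
  apply: (@le_lt_trans _ _ (s m)); last first.
    by apply: lt_trans (HN m Nm) _; rewrite ltey.
  apply: ereal_sup_ubound => /=; exists (fun _ => n) => //.
  exact: const_stop.
split => // P PP; apply/integrableP; split.
  move=> _ Y mY; rewrite setTI; have [_ [Fm _]] := hF m; exact: Fm _ (Em m n Y mY).
rewrite (_ : \int[P]_(x in setT) `|E m n x| = \int[P]_x E m n x); last by apply: eq_integral => w _; rewrite gee0_abs.
apply: le_lt_trans hsup; apply: ereal_sup_ubound; exists P => //.
Qed.
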